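(* Let $A$ be a matching in $K_{2n}$ and let $M$ be uniformly random among perfect matchings of $K_{2n}$ containing $A$. Apply the following procedure $r_A$: set $A':=A$, $M':=M$; while $A'\ne\emptyset$: pick any $(u,v)\in A'$; pick an edge of $M'\setminus A'$ uniformly at random and order its endpoints uniformly at random as $(x,y)$; with probability $1-\frac1{2|M'\setminus A'|+1}$ replace the edges $\{u,v\},\{x,y\}$ in $M'$ by $\{u,y\},\{v,x\}$; then remove $(u,v)$ from $A'$. Output $M'$. Then $r_A(M)$ is a uniformly random perfect matching of $K_{2n}$. Moreover, for every perfect matching $M\supseteq A$, every edge of $r_A(M)$ not in $M$ is incident to a vertex covered by $A$; in particular, if $B$ is an edge set with $A\cup B$ a matching and $B\not\subseteq M$, then $B\not\subseteq r_A(M)$.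
   Context: (When $M'\setminus A'=\emptyset$ the replacement step happens with probability $0$.) *)

(* Defs.v *)
From HB Require Import structures.
From mathcomp Require Import all_boot all_order all_algebra.
Set Implicit Arguments. Unset Strict Implicit. Unset Printing Implicit Defensive.
Import Order.TTheory GRing.Theory Num.Theory.
Local Open Scope ring_scope.

Section Defs.
Variable V : finType.

Definition matching (E : {set {set V}}) : bool :=
  [forall e in E, #|e| == 2%N] &&
  [forall e in E, forall f in E, (e != f) ==> [disjoint e & f]].

Definition perfect (E : {set {set V}}) : bool :=
  matching E && [forall x, exists e in E, x \in e].

Definition covered (A : {set {set V}}) (x : V) : bool := [exists e in A, x \in e].

Definition swapM (M : {set {set V}}) (u v x y : V) : {set {set V}} :=
  ((M :\ [set u; v]) :\ [set x; y]) :|: [set [set u; y]; [set v; x]].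

(* Distribution of the output of the procedure r_A, started from state
   (A', M'), with fuel k; [rA pick k A' M' N] is the probability that the
   output equals N.  [pick A' M'] is the (arbitrary, state-dependent) choice
   of an oriented edge (u,v) of A'. *)
Fixpoint rA (pick : {set {set V}} -> {set {set V}} -> V * V) (k : nat)
  (A' M' N : {set {set V}}) {struct k} : rat :=
  match k with
  | 0 => (N == M')%:R
  | k'.+1 =>
    if A' == set0 then (N == M')%:R else
    let u := (pick A' M').1 in
    let v := (pick A' M').2 in
    let A'' := A' :\ [set u; v] in
    let R := M' :\: A' in
    let m := #|R| in
    if m == 0%N then rA pick k' A'' M' N else
    let p : rat := 1 - 1 / (2 * m + 1)%N%:R in
    \sum_(e in R) \sum_(x in e) \sum_(y in e | y != x)
       (1 / (2 * m)%N%:R) *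
       (p * rA pick k' A'' (swapM M' u v x y) N + (1 - p) * rA pick k' A'' M' N)
  end.

End Defs.

(* Main.v *)
Require Import Defs.
From HB Require Import structures.
From mathcomp Require Import all_boot all_order all_algebra.
From mathcomp Require Import ring lra.
Set Implicit Arguments. Unset Strict Implicit. Unset Printing Implicit Defensive.
Import Order.TTheory GRing.Theory Num.Theory.

Section Basic.
Context {V : finType}.
Implicit Types (M E B : {set {set V}}) (e f : {set V}).

Lemma matching_card E e : matching E -> e \in E -> #|e| = 2.
Proof. by case/andP=> /forall_inP H _ /H /eqP. Qed.

Lemma matching_eq E e f x : matching E -> e \in E -> f \in E -> x \in e -> x \in f -> e = f.
Proof.
case/andP=> _ /forall_inP H eE fE xe xf; apply/eqP; apply: contraT => nef.
have /forall_inP/(_ f fE) := H e eE; rewrite nef /= => /disjoint_setI0 D.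
by have := in_set0 x; rewrite -D inE xe xf.
Qed.

Lemma matchingS E E' : E' \subset E -> matching E -> matching E'.
Proof.
move=> sub /andP[/forall_inP H1 /forall_inP H2]; apply/andP; split.
  by apply/forall_inP => e /(subsetP sub) /H1.
apply/forall_inP => e /(subsetP sub) eE; apply/forall_inP => f /(subsetP sub) fE.
by have /forall_inP := H2 e eE; apply.
Qed.

Lemma set2_eq_mem (a b c d : V) : [set a; b] = [set c; d] -> (a == c) || (a == d).
Proof. move=> H; have : a \in [set c; d] by rewrite -H set21.
by rewrite !inE. Qed.

Lemma set2_card2 (a b : V) : #|[set a; b]| = 2 -> a != b.
Proof. by rewrite cards2; case: (a != b). Qed.

Lemma card2_ex e x : #|e| = 2 -> x \in e -> exists y, y != x /\ e = [set x; y].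
Proof.
move/eqP/cards2P=> [a [b [ab ->]]]; rewrite !inE => /orP[]/eqP->.
  by exists b; rewrite eq_sym.
by exists a; rewrite setUC.
Qed.

Definition pt M (z : V) : V := odflt z [pick y | [set z; y] \in M].

Lemma perfect_matching M : perfect M -> matching M.
Proof. by case/andP. Qed.

Lemma pt_in M z : perfect M -> [set z; pt M z] \in M /\ pt M z != z.
Proof.
case/andP=> mM /forallP/(_ z)/exists_inP[e eM ze].
have [y [yz ey]] := card2_ex (matching_card mM eM) ze.
rewrite /pt; case: pickP => [w wM|/(_ y)]; last by rewrite -ey eM.
split=> //=; apply/eqP => wz; move: (matching_card mM wM).
by rewrite wz setUid cards1.
Qed.

Lemma pt_uniq M e z : perfect M -> e \in M -> z \in e -> e = [set z; pt M z].
Proof.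
move=> pM eM ze; have [H _] := pt_in z pM.
by apply: (matching_eq (perfect_matching pM) eM H ze); rewrite set21.
Qed.

Lemma ptK M z : perfect M -> pt M (pt M z) = z.
Proof.
move=> pM; have [H1 H2] := pt_in z pM.
have E := pt_uniq pM H1 (set22 _ _).
have : z \in [set pt M z; pt M (pt M z)] by rewrite -E set21.
rewrite !inE => /orP[/eqP E'|/eqP //]; by rewrite -E' eqxx in H2.
Qed.

Lemma pt_neq M z : perfect M -> pt M z <> z.
Proof. by move=> pM E; have [_] := pt_in z pM; rewrite E eqxx. Qed.

Lemma pt_mem M (s t : V) : perfect M -> s != t -> ([set s; t] \in M) = (pt M s == t).
Proof.
move=> pM st; apply/idP/eqP => [H|<-]; last by case: (pt_in s pM).
have := pt_uniq pM H (set21 _ _) => E.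
have : t \in [set s; pt M s] by rewrite -E set22.
rewrite !inE => /orP[/eqP ts|/eqP //]; by rewrite ts eqxx in st.
Qed.

Definition mk (f : V -> V) : {set {set V}} := [set [set z; f z] | z : V].

Definition fpi (f : V -> V) := (forall x, f (f x) = x) /\ (forall x, f x <> x).

Lemma mk_mem (f : V -> V) e : (e \in mk f) = [exists z, e == [set z; f z]].
Proof.
apply/imsetP/existsP => [[z _ ->]|[z /eqP->]]; first by exists z.
by exists z.
Qed.

Lemma set2_f (f : V -> V) z c : fpi f -> c \in [set z; f z] -> [set z; f z] = [set c; f c].
Proof.
move=> [ff _]; rewrite !inE => /orP[]/eqP->//.
by rewrite ff setUC.
Qed.

Lemma mk_perfect (f : V -> V) : fpi f -> perfect (mk f).
Proof.
move=> fp; have [ff fn] := fp.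
apply/andP; split; last by apply/forallP=> z; apply/exists_inP; exists [set z; f z];
  [apply: imset_f | rewrite set21].
apply/andP; split.
  apply/forall_inP=> e /imsetP[z _ ->]; rewrite cards2.
  have H : z != f z by apply/eqP => E; apply: (fn z); rewrite -E.
  by rewrite H.
apply/forall_inP=> e /imsetP[z _ ->]; apply/forall_inP=> e' /imsetP[w _ ->].
apply/implyP => ne; apply/pred0P => c /=; apply/negbTE; apply/negP => /andP[c1 c2].
by move: ne; rewrite (set2_f fp c1) (set2_f fp c2) eqxx.
Qed.

Lemma pt_mk (f : V -> V) : fpi f -> forall z, pt (mk f) z = f z.
Proof.
move=> fp z; have pM := mk_perfect fp; have [ff fn] := fp.
have H : [set z; f z] \in mk f by apply: imset_f.
have := pt_uniq pM H (set21 _ _) => E.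
have : f z \in [set z; pt (mk f) z] by rewrite -E set22.
rewrite !inE => /orP[/eqP E'|/eqP //]; by have := fn z; rewrite E'.
Qed.

Lemma mk_pt M : perfect M -> M = mk (pt M).
Proof.
move=> pM; apply/setP => e; apply/idP/imsetP => [eM|[z _ ->]]; last by case: (pt_in z pM).
have := matching_card (perfect_matching pM) eM => /eqP/cards2P[a [b [_ E]]].
by exists a => //; apply: (pt_uniq pM eM); rewrite E set21.
Qed.

Lemma fpi_pt M : perfect M -> fpi (pt M).
Proof. by move=> pM; split=> x; [apply: ptK | apply: pt_neq]. Qed.

Lemma eq_mk (f g : V -> V) : f =1 g -> mk f = mk g.
Proof. by move=> fg; apply: eq_imset => z; rewrite fg. Qed.

Lemma perfect_eq M M' : perfect M -> perfect M' -> pt M =1 pt M' -> M = M'.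
Proof. by move=> pM pM' E; rewrite (mk_pt pM) (mk_pt pM') (eq_mk E). Qed.

End Basic.


Ltac noif t := lazymatch t with context[if _ then _ else _] => fail | _ => idtac end.
Ltac bash :=
  repeat (match goal with
  | |- context[(?a == ?b)] => noif a; noif b; case: (a =P b) => ?
  end; try (exfalso; congruence)).

Section S2.
Context {V : finType}.
Implicit Types (M E B : {set {set V}}) (e f : {set V}).

Definition Sf (p : V -> V) (u v x y : V) (z : V) : V :=
  if z == u then y else if z == y then u else if z == v then x else if z == x then v else p z.

Definition Rf (p : V -> V) (u v : V) (z : V) : V :=
  if z == u then v else if z == v then u else if z == p u then p v
  else if z == p v then p u else p z.

Lemma Sf_fpi p u v x y : fpi p -> p u = v -> p x = y -> x <> u -> x <> v ->
  fpi (Sf p u v x y).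
Proof.
move=> [pp pn] pu px xu xv.
have := pp u; have := pp v; have := pp x; have := pp y.
have := pn u; have := pn v; have := pn x; have := pn y.
move=> *; split=> z; have := pp z; have := pn z; move=> *;
  rewrite /Sf; bash; congruence.
Qed.

Lemma Rf_fpi p u v : fpi p -> u <> v -> fpi (Rf p u v).
Proof.
move=> [pp pn] uv.
have := pp u; have := pp v; have := pp (p u); have := pp (p v).
have := pn u; have := pn v; have := pn (p u); have := pn (p v).
move=> *; split=> z; have := pp z; have := pn z; move=> *;
  rewrite /Rf; bash; congruence.
Qed.

Lemma Rf_id p u v : fpi p -> p u = v -> Rf p u v =1 p.
Proof.
move=> [pp pn] pu z.
have := pp u; have := pp v; have := pp z; have := pn u; have := pn v; have := pn z.
move=> *; rewrite /Rf; bash; congruence.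
Qed.

Lemma Rf_comm (p : V -> V) (u v s t : V) :
  fpi p -> u <> v -> u <> s -> u <> t -> v <> s -> v <> t -> s <> t ->
  forall z, Rf (Rf p s t) u v z = Rf (Rf p u v) s t z.
Proof.
move=> [pp pn] H1 H2 H3 H4 H5 H6 z.
have := pp u; have := pp v; have := pp s; have := pp t; have := pp z.
have := pn u; have := pn v; have := pn s; have := pn t; have := pn z.
move=> *.
rewrite /Rf; bash; congruence.
Qed.

Lemma Rf_ext p q u v : p =1 q -> Rf p u v =1 Rf q u v.
Proof. by move=> pq z; rewrite /Rf !pq. Qed.

Lemma Sf_ext p q u v x y : p =1 q -> Sf p u v x y =1 Sf q u v x y.
Proof. by move=> pq z; rewrite /Sf !pq. Qed.

Lemma swap_mk M u v x y : perfect M -> pt M u = v -> pt M x = y -> x <> u -> x <> v ->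
  swapM M u v x y = mk (Sf (pt M) u v x y).
Proof.
move=> pM pu px xu xv; have [pp pn] := fpi_pt pM; set p := pt M in pu px pp pn *.
have uv : u <> v by move=> E; apply: (pn u); rewrite pu.
have xy : x <> y by move=> E; apply: (pn x); rewrite px.
have yu : y <> u by move=> E; apply: xv; rewrite -(pp x) px E pu.
have yv : y <> v by move=> E; apply: xu; rewrite -(pp x) px E -pu pp.
apply/setP => e; rewrite mk_mem /swapM !inE.
apply/idP/existsP => [/orP[/andP[ne1 /andP[ne2 eM]]|/orP[]/eqP->]|[z /eqP->]].
- rewrite (mk_pt pM) mk_mem in eM; case/existsP: eM => z /eqP E; subst e.
  exists z; apply/eqP; congr [set _; _]; rewrite /Sf.
  have H: forall a b, [set z; p z] != [set a; b] -> p a = b -> z <> a.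
    by move=> a b /eqP N Eb E; apply: N; rewrite E Eb.
  have H': forall a b, [set z; p z] != [set a; b] -> p a = b -> z <> b.
    by move=> a b /eqP N E Eb; apply: N; rewrite Eb -E pp setUC.
  have := H _ _ ne1 px; have := H _ _ ne2 pu; have := H' _ _ ne1 px; have := H' _ _ ne2 pu.
  by move=> *; bash.
- by exists u; rewrite /Sf eqxx.
- exists v; rewrite /Sf; bash; done.
- have [->|zu] := eqVneq z u.
    have ->: Sf p u v x y u = y by rewrite /Sf eqxx.
    by rewrite eqxx !orbT.
  have [->|zy] := eqVneq z y.
    have ->: Sf p u v x y y = u by rewrite /Sf; bash.
    have ->: [set y; u] = [set u; y] by rewrite setUC.
    by rewrite eqxx !orbT.
  have [->|zv] := eqVneq z v.
    have ->: Sf p u v x y v = x by rewrite /Sf; bash.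
    by rewrite eqxx !orbT.
  have [->|zx] := eqVneq z x.
    have ->: Sf p u v x y x = v by rewrite /Sf; bash.
    have ->: [set x; v] = [set v; x] by rewrite setUC.
    by rewrite eqxx !orbT.
  rewrite /Sf (negbTE zu) (negbTE zy) (negbTE zv) (negbTE zx).
  apply/orP; left; apply/andP; split.
    apply/eqP => /set2_eq_mem /orP[]/eqP E; [by rewrite E eqxx in zx| by rewrite E eqxx in zy].
  apply/andP; split.
    apply/eqP => /set2_eq_mem /orP[]/eqP E; [by rewrite E eqxx in zu| by rewrite E eqxx in zv].
  by rewrite pt_mem // eq_sym; apply/eqP => E; apply: (pn z); rewrite E.
Qed.

Definition Rsw (u v : V) M : {set {set V}} :=
  if pt M u == v then M else swapM M u (pt M u) (pt M v) v.

Lemma Rsw_mk M u v : perfect M -> u <> v -> Rsw u v M = mk (Rf (pt M) u v).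
Proof.
move=> pM uv; have fp := fpi_pt pM; have [pp pn] := fp.
rewrite /Rsw; case: eqP => [E|NE].
  by rewrite {1}(mk_pt pM); apply: eq_mk => z; rewrite Rf_id.
rewrite swap_mk //.
- by move=> E; apply: NE; rewrite -E pp.
- by move=> E; apply: uv; rewrite -(pp u) -E pp.
Qed.

End S2.


Section S3.
Context {V : finType}.
Implicit Types (M E B : {set {set V}}) (e f : {set V}).

Lemma cover_MB M B : perfect M -> B \subset M ->
  cover (M :\: B) = [set x | ~~ covered B x].
Proof.
move=> pM sBM; apply/setP => x; rewrite inE; apply/bigcupP/idP.
  move=> [e /setDP[eM eB] xe]; apply/negP => /exists_inP[b bB xb].
  have E := matching_eq (perfect_matching pM) eM (subsetP sBM _ bB) xe xb.
  by rewrite E bB in eB.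
move=> ncov; have [H _] := pt_in x pM; exists [set x; pt M x]; last by rewrite set21.
rewrite inE H andbT; apply/negP => HB; move/negP: ncov; apply; apply/exists_inP.
by exists [set x; pt M x]; rewrite // set21.
Qed.

Lemma triv_MB M B : perfect M -> trivIset (M :\: B).
Proof.
move=> pM; apply/trivIsetP => e f /setDP[eM _] /setDP[fM _] nef.
rewrite -setI_eq0; apply/set0Pn => [[x /setIP[xe xf]]].
by move: nef; rewrite (matching_eq (perfect_matching pM) eM fM xe xf) eqxx.
Qed.

Lemma sum_MB (R : Type) (idx : R) (op : Monoid.com_law idx) M B (F : V -> R) :
  perfect M -> B \subset M ->
  \big[op/idx]_(e in M :\: B) \big[op/idx]_(x in e) F x =
  \big[op/idx]_(x | ~~ covered B x) F x.
Proof.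
move=> pM sBM; rewrite -(big_trivIset _ (triv_MB B pM)) (cover_MB pM sBM).
by apply: eq_bigl => x; rewrite inE.
Qed.

Lemma card_uncov M B : perfect M -> B \subset M ->
  #|[set x | ~~ covered B x]| = (2 * #|M :\: B|)%N.
Proof.
move=> pM sBM; rewrite -sum1_card.
transitivity (\sum_(x | ~~ covered B x) 1)%N; first by apply: eq_bigl => x; rewrite inE.
rewrite -(sum_MB _ (fun=> 1%N) pM sBM).
rewrite (eq_bigr (fun _ => 2%N)); first by rewrite sum_nat_const mulnC.
move=> e /setDP[eM _]; rewrite sum1_card.
exact: matching_card (perfect_matching pM) eM.
Qed.

Lemma covered0 x : covered (set0 : {set {set V}}) x = false.
Proof. by apply/exists_inP => [[e]]; rewrite inE. Qed.

Lemma card_perfect M : perfect M -> (2 * #|M|)%N = #|V|.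
Proof.
move=> pM; have := card_uncov pM (sub0set M); rewrite setD0 => <-.
by apply: eq_card => x; rewrite !inE covered0.
Qed.

Lemma card_MB M B : B \subset M -> #|M :\: B| = (#|M| - #|B|)%N.
Proof. by move=> sBM; rewrite cardsD (setIidPr sBM). Qed.

End S3.



Section S4.
Context {V : finType}.
Implicit Types (M E B : {set {set V}}) (e f : {set V}).

Lemma FL1 (p : V -> V) u v x : fpi p -> p u = v -> x <> u -> x <> v ->
  Rf (Sf p u v x (p x)) u v =1 p.
Proof.
move=> [pp pn] pu xu xv z.
have := pp u; have := pp v; have := pp x; have := pp z;
have := pn u; have := pn v; have := pn x; have := pn z.
move=> *; rewrite /Rf /Sf; bash; congruence.
Qed.

Lemma FL2 (p : V -> V) u v : fpi p -> p u <> v -> u <> v ->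
  Sf (Rf p u v) u v (p v) (Rf p u v (p v)) =1 p.
Proof.
move=> [pp pn] pu uv z.
have := pp u; have := pp v; have := pp z;
have := pn u; have := pn v; have := pn z.
move=> *; rewrite /Rf /Sf; bash; congruence.
Qed.

Lemma Sf_out (p : V -> V) u v x y z : z <> u -> z <> v -> z <> x -> z <> y ->
  Sf p u v x y z = p z.
Proof. by move=> *; rewrite /Sf; bash. Qed.

Lemma Rf_out (p : V -> V) u v z : z <> u -> z <> v -> z <> p u -> z <> p v ->
  Rf p u v z = p z.
Proof. by move=> *; rewrite /Rf; bash. Qed.

Lemma covered_mem B b x : b \in B -> x \in b -> covered B x.
Proof. by move=> bB xb; apply/exists_inP; exists b. Qed.

Definition PM B := [set M : {set {set V}} | perfect M && (B \subset M)].

Lemma PMP B M : (M \in PM B) = perfect M && (B \subset M).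
Proof. by rewrite inE. Qed.

Lemma other_edge B b u v s : matching B -> [set u; v] \in B -> b \in B :\ [set u; v] ->
  s \in b -> s <> u /\ s <> v.
Proof.
move=> mB aB /setD1P[ba bB] sb; split=> E; subst s.
  by move: ba; rewrite (matching_eq mB bB aB sb (set21 _ _)) eqxx.
by move: ba; rewrite (matching_eq mB bB aB sb (set22 _ _)) eqxx.
Qed.

Lemma sub_mk B (q : V -> V) : matching B ->
  (forall s t, [set s; t] \in B -> s != t -> q s = t) -> B \subset mk q.
Proof.
move=> mB H; apply/subsetP => b bB.
have /eqP/cards2P[s [t [st E]]] := matching_card mB bB; subst b.
by rewrite -(H s t bB st); apply: imset_f.
Qed.

Lemma sub_pt B M s t : perfect M -> B \subset M -> [set s; t] \in B -> s != t -> pt M s = t.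
Proof. by move=> pM sBM sB st; apply/eqP; rewrite -pt_mem //; apply: (subsetP sBM). Qed.

Section Hx.
Variables (B M : {set {set V}}) (u v : V).
Hypotheses (mB : matching B) (aB : [set u; v] \in B) (uv : u != v)
  (pM : perfect M) (sBM : B \subset M).

Let p := pt M.
Let fp : fpi p := fpi_pt pM.
Let pu : p u = v := sub_pt pM sBM aB uv.

Definition hx (x : V) := swapM M u v x (p x).
Definition qx (x : V) := Sf p u v x (p x).

Lemma unc_neq x : ~~ covered B x -> x <> u /\ x <> v.
Proof.
move=> nc; split=> E; subst x; move/negP: nc; apply; apply: (covered_mem aB);
  [exact: set21 | exact: set22].
Qed.

Lemma hx_mk x : ~~ covered B x -> hx x = mk (qx x).
Proof. by move=> /unc_neq[xu xv]; rewrite /hx swap_mk. Qed.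

Lemma qx_fpi x : ~~ covered B x -> fpi (qx x).
Proof. by move=> /unc_neq[xu xv]; apply: Sf_fpi. Qed.

Lemma hx_perfect x : ~~ covered B x -> perfect (hx x).
Proof. by move=> nc; rewrite hx_mk //; apply: mk_perfect; apply: qx_fpi. Qed.

Lemma pt_hx x : ~~ covered B x -> pt (hx x) =1 qx x.
Proof. by move=> nc; rewrite hx_mk //; apply: pt_mk; apply: qx_fpi. Qed.

Lemma hx_sub x : ~~ covered B x -> B :\ [set u; v] \subset hx x.
Proof.
move=> nc; have [xu xv] := unc_neq nc; have [pp pn] := fp.
rewrite hx_mk //; apply: sub_mk; first by apply: matchingS mB; apply: subsetDl.
move=> s t sB st; have [su sv] := other_edge mB aB sB (set21 _ _).
have [sBB _] : [set s; t] \in B /\ True by move: sB => /setD1P[_ ->].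
have ps : p s = t := sub_pt pM sBM sBB st.
rewrite /qx Sf_out //.
- by move=> E; subst s; move/negP: nc; apply; apply: (covered_mem sBB); apply: set21.
- move=> E; move/negP: nc; apply; apply: (covered_mem sBB).
  by rewrite -(pp x) -E ps set22.
Qed.

Lemma Rsw_hx x : ~~ covered B x -> Rsw u v (hx x) = M.
Proof.
move=> nc; have [xu xv] := unc_neq nc.
rewrite Rsw_mk; last by apply/eqP.
  rewrite (mk_pt pM); apply: eq_mk => z.
  by rewrite (Rf_ext _ _ (pt_hx nc)) FL1.
exact: hx_perfect.
Qed.

Lemma hx_neq x : ~~ covered B x -> hx x != M.
Proof.
move=> nc; have [xu xv] := unc_neq nc; have [pp pn] := fp.
have pu' : pt M u = v := pu.
apply/eqP => E; have := pt_hx nc u; rewrite E /qx /Sf eqxx pu' => H.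
by apply: xu; rewrite -(pp x) -H -pu pp.
Qed.

Lemma pt_hx_v x : ~~ covered B x -> pt (hx x) v = x.
Proof.
move=> nc; have [xu xv] := unc_neq nc; have [pp pn] := fp.
rewrite pt_hx // /qx /Sf; bash; congruence.
Qed.

Lemma hx_inj : {in [set x | ~~ covered B x] &, injective hx}.
Proof.
move=> x y; rewrite !inE => nx ny E.
by rewrite -(pt_hx_v nx) -(pt_hx_v ny) E.
Qed.

Lemma Rsw_eqM M2 x : perfect M2 -> B :\ [set u; v] \subset M2 -> Rsw u v M2 = M -> M2 != M ->
  x = pt M2 v -> ~~ covered B x /\ M2 = hx x.
Proof.
move=> pM2 sM2 RM NE ->; have [pp pn] := fpi_pt pM2; set p2 := pt M2 in pp pn *.
have p2u : p2 u <> v.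
  move=> E; move: NE; rewrite -RM /Rsw.
  have -> : pt M2 u == v by apply/eqP.
  by rewrite eqxx.
have uv' : u <> v by apply/eqP.
have pMR : pt M =1 Rf p2 u v.
  by move: RM; rewrite Rsw_mk // => <- z; rewrite pt_mk //; apply: Rf_fpi.
have xv : p2 v <> v by apply: pn.
have xu : p2 v <> u by move=> E; apply: p2u; rewrite -E pp.
have nc : ~~ covered B (p2 v).
  apply/negP => /exists_inP[b bB xb].
  have [ba|ba] := eqVneq b [set u; v].
    by move: xb; rewrite ba !inE => /orP[]/eqP.
  have bB' : b \in B :\ [set u; v] by rewrite !inE ba.
  have E := pt_uniq pM2 (subsetP sM2 _ bB') xb.
  have vb : v \in b by rewrite E -/p2 pp set22.
  by have [_ ] := other_edge mB aB bB' vb.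
split=> //; apply: perfect_eq => //; first exact: hx_perfect.
move=> z; rewrite pt_hx // /qx /Sf /p !pMR.
have H := FL2 (fpi_pt pM2) p2u uv' z; rewrite /Sf in H.
by rewrite H.
Qed.

End Hx.

Lemma R_PM B u v M2 : matching B -> [set u; v] \in B -> u != v ->
  M2 \in PM (B :\ [set u; v]) -> Rsw u v M2 \in PM B.
Proof.
move=> mB aB uv; rewrite !PMP => /andP[pM2 sM2].
have [pp pn] := fpi_pt pM2; set p2 := pt M2 in pp pn *.
have uv' : u <> v by apply/eqP.
rewrite Rsw_mk //; apply/andP; split; first by apply: mk_perfect; apply: Rf_fpi.
apply: sub_mk => // s t sB st.
have [ba|ba] := eqVneq [set s; t] [set u; v].
  have : s \in [set u; v] by rewrite -ba set21.
  have : t \in [set u; v] by rewrite -ba set22.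
  rewrite !inE => /orP[]/eqP Et /orP[]/eqP Es; subst s t;
    rewrite ?eqxx // in st; rewrite /Rf; bash; congruence.
have bB' : [set s; t] \in B :\ [set u; v] by rewrite !inE ba.
have ps : p2 s = t := sub_pt pM2 sM2 bB' st.
have [su sv] := other_edge mB aB bB' (set21 _ _).
have [tu tv] := other_edge mB aB bB' (set22 _ _).
rewrite Rf_out // -/p2.
- by move=> E; apply: tu; rewrite -ps E pp.
- by move=> E; apply: tv; rewrite -ps E pp.
Qed.

End S4.

Local Open Scope ring_scope.

Section S5.
Context {V : finType}.
Implicit Types (M E B : {set {set V}}) (e : {set V}).

Lemma Ksum B M u v (f : {set {set V}} -> rat) :
  matching B -> [set u; v] \in B -> u != v -> perfect M -> B \subset M ->
  \sum_(M2 in PM (B :\ [set u; v])) (Rsw u v M2 == M)%:R * f M2 =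
  f M + \sum_(x in [set x | ~~ covered B x]) f (hx M u v x).
Proof.
move=> mB aB uv pM sBM.
rewrite (eq_bigr (fun M2 => if Rsw u v M2 == M then f M2 else 0)); last first.
  by move=> M2 _; case: eqP; rewrite ?mul1r ?mul0r.
rewrite -big_mkcondr (bigD1 M) /=; last first.
  rewrite PMP pM (subset_trans (subsetDl _ _) sBM) /Rsw.
  by rewrite (sub_pt pM sBM aB uv) eqxx /= eqxx.
congr (_ + _); rewrite -(big_imset _ (hx_inj aB uv pM sBM)).
apply: eq_bigl => M2; apply/idP/imsetP.
  move=> /andP[/andP[]]; rewrite PMP => /andP[pM2 sM2] /eqP RM NE.
  have [nc E] := Rsw_eqM mB aB uv pM sBM pM2 sM2 RM NE (erefl _).
  by exists (pt M2 v); rewrite ?inE.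
move=> [x]; rewrite inE => nc ->.
rewrite PMP (hx_perfect aB uv pM sBM nc) (hx_sub mB aB uv pM sBM nc) (Rsw_hx aB uv pM sBM nc) eqxx /=.
exact: (hx_neq aB uv pM sBM nc).
Qed.

End S5.

Section S6.
Context {V : finType}.
Implicit Types (M E B : {set {set V}}) (e : {set V}).

Definition stepexpr B (u v : V) (f : {set {set V}} -> rat) M : rat :=
  if #|M :\: B| == 0%N then f M else
  \sum_(e in M :\: B) \sum_(x in e) \sum_(y in e | y != x)
   (1 / (2 * #|M :\: B|)%N%:R) *
   ((1 - 1 / (2 * #|M :\: B| + 1)%N%:R) * f (swapM M u v x y) +
    (1 - (1 - 1 / (2 * #|M :\: B| + 1)%N%:R)) * f M).

Lemma rA_S pick k B M N : B != set0 ->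
  rA pick k.+1 B M N = stepexpr B (pick B M).1 (pick B M).2
     (fun M2 => rA pick k (B :\ [set (pick B M).1; (pick B M).2]) M2 N) M.
Proof. by move=> /negbTE H; rewrite /= H. Qed.

Definition cst (n : nat) B : rat := ((2 * (n - #|B|) + 1)%N%:R)^-1.

Lemma triple_sum M B (G : V -> V -> rat) : perfect M -> B \subset M ->
  \sum_(e in M :\: B) \sum_(x in e) \sum_(y in e | y != x) G x y =
  \sum_(x in [set x | ~~ covered B x]) G x (pt M x).
Proof.
move=> pM sBM.
rewrite (eq_bigr (fun e => \sum_(x in e) G x (pt M x))); last first.
  move=> e /setDP[eM _]; apply: eq_bigr => x xe.
  apply: big_pred1 => y /=; have E := pt_uniq pM eM xe.
  rewrite E !inE; have [_ nx] := pt_in x pM.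
  case: (y =P x) => [->|_] /=; first by rewrite eq_sym (negbTE nx).
  by rewrite andbT.
rewrite (sum_MB _ (fun x => G x (pt M x)) pM sBM).
by apply: eq_bigl => x; rewrite inE.
Qed.

Lemma kstep (n : nat) B M u v (f : {set {set V}} -> rat) :
  #|V| = (2 * n)%N ->
  matching B -> [set u; v] \in B -> u != v -> perfect M -> B \subset M ->
  stepexpr B u v f M = cst n B * (f M + \sum_(x in [set x | ~~ covered B x]) f (hx M u v x)).
Proof.
move=> hV mB aB uv pM sBM.
have cM : #|M| = n by have := card_perfect pM; rewrite hV => /eqP; rewrite eqn_pmul2l // => /eqP.
have m_eq : #|M :\: B| = (n - #|B|)%N by rewrite card_MB // cM.
have cX := card_uncov pM sBM.
rewrite /stepexpr /cst -m_eq; case: eqP => [m0|m0].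
  rewrite m0 muln0 add0n invr1 mul1r.
  have X0 : [set x | ~~ covered B x] = set0 by apply: cards0_eq; rewrite cX m0.
  by rewrite X0 big_set0 addr0.
rewrite (triple_sum _ pM sBM).
set m := #|M :\: B|.
rewrite (eq_bigr (fun x => (1 / (2 * m)%N%:R * (1 - 1 / (2 * m + 1)%N%:R)) * f (hx M u v x)
   + (1 / (2 * m)%N%:R * (1 - (1 - 1 / (2 * m + 1)%N%:R))) * f M)); last first.
  by move=> x _; rewrite /hx; ring.
rewrite big_split /= -mulr_sumr sumr_const cX -/m.
have hm : (m%:R : rat) != 0 by rewrite pnatr_eq0; apply/eqP.
have E : forall (x : rat), x *+ (2 * m) = x * (2 * m%:R).
  by move=> x; rewrite -(mulr_natr x (2 * m)) natrM.
rewrite !natrD !E.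
field.
have hp : (0 : rat) < m%:R by rewrite ltr0n lt0n; apply/eqP.
by apply/andP; split; apply: lt0r_neq0; lra.
Qed.

End S6.

Local Open Scope ring_scope.


Section S7.
Context {V : finType}.
Implicit Types (M E B : {set {set V}}) (e : {set V}).

Definition K (n : nat) B (u v : V) (f : {set {set V}} -> rat) M : rat :=
  cst n B * \sum_(M2 in PM (B :\ [set u; v])) (Rsw u v M2 == M)%:R * f M2.

Lemma kstepK (n : nat) B M u v (f : {set {set V}} -> rat) :
  #|V| = (2 * n)%N ->
  matching B -> [set u; v] \in B -> u != v -> perfect M -> B \subset M ->
  stepexpr B u v f M = K n B u v f M.
Proof. by move=> hV mB aB uv pM sBM; rewrite (kstep f hV) // /K Ksum. Qed.

Lemma Rf_sym (p : V -> V) u v : fpi p -> u <> v -> Rf p v u =1 Rf p u v.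
Proof.
move=> [pp pn] uv z; have := pp u; have := pp v; have := pn u; have := pn v.
by move=> *; rewrite /Rf; bash; congruence.
Qed.

Lemma Rsw_sym M u v : perfect M -> u != v -> Rsw v u M = Rsw u v M.
Proof.
move=> pM /eqP uv; rewrite !Rsw_mk //; last by move=> E; apply: uv.
by apply: eq_mk; apply: Rf_sym => //; apply: fpi_pt.
Qed.

Lemma K_sym n B u v u' v' f M : u != v -> [set u'; v'] = [set u; v] ->
  K n B u' v' f M = K n B u v f M.
Proof.
move=> uv E; rewrite /K E; congr (_ * _); apply: eq_bigr => M2; rewrite PMP => /andP[pM2 _].
have : u' \in [set u; v] by rewrite -E set21.
have : v' \in [set u; v] by rewrite -E set22.
rewrite !inE => /orP[]/eqP Ev /orP[]/eqP Eu; subst u' v' => //.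
- by have := cards2 u v; rewrite -E setUid cards1 uv.
- by rewrite Rsw_sym.
- by have := cards2 u v; rewrite -E setUid cards1 uv.
Qed.

Lemma K_eq n B u v f g M : {in PM (B :\ [set u; v]), f =1 g} -> K n B u v f M = K n B u v g M.
Proof. by move=> fg; rewrite /K; congr (_ * _); apply: eq_bigr => M2 /fg ->. Qed.

Lemma Kcomp D M u v s t (g : {set {set V}} -> rat) :
  matching D -> [set s; t] \in D -> s != t ->
  \sum_(M1 in PM D) (Rsw u v M1 == M)%:R *
      \sum_(M2 in PM (D :\ [set s; t])) ((Rsw s t M2 == M1)%:R * g M2) =
  \sum_(M2 in PM (D :\ [set s; t])) (Rsw u v (Rsw s t M2) == M)%:R * g M2.
Proof.
move=> mD bD st.
rewrite (eq_bigr (fun M1 => \sum_(M2 in PM (D :\ [set s; t]))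
   (Rsw u v M1 == M)%:R * ((Rsw s t M2 == M1)%:R * g M2))); last first.
  by move=> M1 _; rewrite mulr_sumr.
rewrite exchange_big /=; apply: eq_bigr => M2 M2in.
rewrite (bigD1 (Rsw s t M2)) /=; last exact: R_PM.
rewrite eqxx mul1r big1 ?addr0 //.
by move=> M1 /andP[_ /negbTE]; rewrite eq_sym => ->; rewrite mul0r mulr0.
Qed.

Lemma cardD1_in B b : b \in B -> #|B :\ b| = (#|B| - 1)%N.
Proof. by move=> bB; rewrite (cardsD1 b B) bB add1n subSS subn0. Qed.

Lemma setD1C (B : {set {set V}}) a b : B :\ a :\ b = B :\ b :\ a.
Proof. by rewrite !setDDl setUC. Qed.

Lemma KK n B u v s t g M :
  matching B -> [set u; v] \in B -> [set s; t] \in B -> [set u; v] != [set s; t] ->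
  u != v -> s != t ->
  K n B u v (K n (B :\ [set u; v]) s t g) M = K n B s t (K n (B :\ [set s; t]) u v g) M.
Proof.
move=> mB aB bB ab uv st.
have mBa : matching (B :\ [set u; v]) by apply: matchingS mB; apply: subsetDl.
have mBb : matching (B :\ [set s; t]) by apply: matchingS mB; apply: subsetDl.
have bBa : [set s; t] \in B :\ [set u; v] by rewrite !inE eq_sym ab.
have aBb : [set u; v] \in B :\ [set s; t] by rewrite !inE ab.
rewrite /K.
rewrite (eq_bigr (fun M1 => cst n (B :\ [set u; v]) * ((Rsw u v M1 == M)%:R *
  \sum_(M2 in PM (B :\ [set u; v] :\ [set s; t])) ((Rsw s t M2 == M1)%:R * g M2))));
  last by move=> M1 _; rewrite mulrCA.
rewrite -mulr_sumr (Kcomp _ _ _ _ mBa bBa st).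
rewrite [in RHS](eq_bigr (fun M1 => cst n (B :\ [set s; t]) * ((Rsw s t M1 == M)%:R *
  \sum_(M2 in PM (B :\ [set s; t] :\ [set u; v])) ((Rsw u v M2 == M1)%:R * g M2))));
  last by move=> M1 _; rewrite mulrCA.
rewrite -mulr_sumr (Kcomp _ _ _ _ mBb aBb uv).
have -> : cst n (B :\ [set u; v]) = cst n (B :\ [set s; t]) by rewrite /cst !cardD1_in.
rewrite setD1C; congr (_ * (_ * _)); apply: eq_bigr => M2; rewrite PMP => /andP[pM2 sM2].
have [[su sv] [tu tv]] : (s <> u /\ s <> v) /\ (t <> u /\ t <> v).
  by split; apply: (other_edge mB aB bBa); rewrite ?set21 ?set22.
have uv' : u <> v by apply/eqP.
have st' : s <> t by apply/eqP.
suff -> : Rsw u v (Rsw s t M2) = Rsw s t (Rsw u v M2) by [].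
have fp := fpi_pt pM2.
have p1 : perfect (Rsw s t M2) by rewrite (Rsw_mk pM2 st'); apply: mk_perfect; apply: Rf_fpi.
have p2 : perfect (Rsw u v M2) by rewrite (Rsw_mk pM2 uv'); apply: mk_perfect; apply: Rf_fpi.
rewrite (Rsw_mk p1 uv') (Rsw_mk p2 st').
apply: eq_mk => z.
rewrite (Rsw_mk pM2 uv') (Rsw_mk pM2 st').
rewrite (Rf_ext _ _ (pt_mk (Rf_fpi fp st'))) (Rf_ext _ _ (pt_mk (Rf_fpi fp uv'))).
exact: (Rf_comm fp uv' (nesym su) (nesym tu) (nesym sv) (nesym tv) st' z).
Qed.

End S7.

Local Open Scope ring_scope.

Section Main.
Context {V : finType}.
Variables (n : nat) (A : {set {set V}}) (pick : {set {set V}} -> {set {set V}} -> V * V).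
Hypothesis hV : #|V| = (2 * n)%N.
Hypothesis mA : matching A.
Hypothesis hpick : forall A' M' : {set {set V}}, A' \subset A -> A' != set0 ->
      [set (pick A' M').1; (pick A' M').2] \in A'.

Lemma edge_neq (B : {set {set V}}) (u v : V) : B \subset A -> [set u; v] \in B -> u != v.
Proof.
by move=> sBA aB; apply: set2_card2; apply: (matching_card (matchingS sBA mA)).
Qed.

Lemma IND k : forall B : {set {set V}}, #|B| = k.+1 -> B \subset A -> forall u v : V, [set u; v] \in B ->
  forall M, M \in PM B -> forall N : {set {set V}},
  rA pick k.+1 B M N = K n B u v (fun M2 => rA pick k (B :\ [set u; v]) M2 N) M.
Proof.
elim: k => [|k IH] B cB sBA u v aB M; rewrite PMP => /andP[pM sBM] N;
  (have Bn0 : B != set0 by apply/set0Pn; exists [set u; v]);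
  have bB := hpick M sBA Bn0;
  have mB := matchingS sBA mA;
  rewrite rA_S // (kstepK _ hV) //; try exact: (edge_neq sBA bB);
  set u' := (pick B M).1 in bB *; set v' := (pick B M).2 in bB *;
  have uv := edge_neq sBA aB; have uv' := edge_neq sBA bB.
- have [E|NE] := eqVneq [set u'; v'] [set u; v]; first by rewrite E (K_sym _ _ _ _ uv E).
  move/eqP/cards1P: cB => [b Eb]; move: aB bB NE; rewrite Eb !inE => /eqP-> /eqP->.
  by rewrite eqxx.
- have [E|NE] := eqVneq [set u'; v'] [set u; v]; first by rewrite E (K_sym _ _ _ _ uv E).
  have sBa : B :\ [set u; v] \subset A by apply: subset_trans sBA; apply: subsetDl.
  have sBb : B :\ [set u'; v'] \subset A by apply: subset_trans sBA; apply: subsetDl.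
  have cBa : #|B :\ [set u; v]| = k.+1 by rewrite cardD1_in // cB subn1.
  have cBb : #|B :\ [set u'; v']| = k.+1 by rewrite cardD1_in // cB subn1.
  have bBa : [set u'; v'] \in B :\ [set u; v] by rewrite !inE NE.
  have aBb : [set u; v] \in B :\ [set u'; v'] by rewrite !inE eq_sym NE.
  rewrite (@K_eq _ n B u' v' _ (K n (B :\ [set u'; v']) u v
     (fun M3 => rA pick k (B :\ [set u'; v'] :\ [set u; v]) M3 N)) M); last first.
    by move=> M2 M2in; rewrite (IH _ cBb sBb _ _ aBb M2 M2in).
  rewrite [RHS](@K_eq _ n B u v _ (K n (B :\ [set u; v]) u' v'
     (fun M3 => rA pick k (B :\ [set u; v] :\ [set u'; v']) M3 N)) M); last first.
    by move=> M2 M2in; rewrite (IH _ cBa sBa _ _ bBa M2 M2in).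
  by rewrite KK // setD1C.
Qed.


Lemma UNI (B : {set {set V}}) (u v : V) (f : {set {set V}} -> rat) : matching B -> [set u; v] \in B -> u != v ->
  \sum_(M in PM B) K n B u v f M = cst n B * \sum_(M2 in PM (B :\ [set u; v])) f M2.
Proof.
move=> mB aB uv; rewrite /K -mulr_sumr; congr (_ * _).
rewrite exchange_big /=; apply: eq_bigr => M2 M2in.
rewrite (bigD1 (Rsw u v M2)) /=; last exact: R_PM.
rewrite eqxx mul1r big1 ?addr0 //.
by move=> M /andP[_ /negbTE]; rewrite eq_sym => ->; rewrite mul0r.
Qed.

Lemma K_one (B : {set {set V}}) (u v : V) (M : {set {set V}}) : matching B -> [set u; v] \in B -> u != v -> M \in PM B ->
  K n B u v (fun=> 1) M = 1.
Proof.
move=> mB aB uv; rewrite PMP => /andP[pM sBM].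
have cM : #|M| = n by have := card_perfect pM; rewrite hV => /eqP; rewrite eqn_pmul2l // => /eqP.
rewrite /K Ksum // sumr_const (card_uncov pM sBM) (card_MB sBM) cM /cst.
by rewrite addrC -(natrD _ _ 1) mulVf // pnatr_eq0 addn1.
Qed.

Lemma CNT (B : {set {set V}}) (u v : V) : B \subset A -> [set u; v] \in B ->
  #|PM B|%:R = cst n B * #|PM (B :\ [set u; v])|%:R.
Proof.
move=> sBA aB; have mB := matchingS sBA mA; have uv := edge_neq sBA aB.
rewrite -!sum1_card !natr_sum -(UNI (fun=> 1) mB aB uv).
by apply: eq_bigr => M MB; rewrite K_one.
Qed.

Lemma sum_eqN (P : {set {set {set V}}}) (N : {set {set V}}) :
  \sum_(M in P) ((N == M)%:R : rat) = (N \in P)%:R.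
Proof.
case: (boolP (N \in P)) => NP.
  rewrite (bigD1 N) //= eqxx big1 ?addr0 // => M /andP[_ /negbTE].
  by rewrite eq_sym => ->.
by rewrite big1 // => M MP; case: eqP => // E; subst; rewrite MP in NP.
Qed.

Lemma UN k : forall B : {set {set V}}, B \subset A -> #|B| = k -> forall N : {set {set V}},
  (\sum_(M in PM B) rA pick k B M N) * #|PM (set0 : {set {set V}})|%:R = #|PM B|%:R * (perfect N)%:R.
Proof.
elim: k => [|k IH] B sBA cB N.
  have -> : B = set0 by apply: cards0_eq.
  by rewrite /= sum_eqN PMP sub0set andbT mulrC.
have Bn0 : B != set0 by apply/eqP => E; rewrite E cards0 in cB.
have bB := hpick set0 sBA Bn0.
set u := (pick B set0).1 in bB *; set v := (pick B set0).2 in bB *.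
have mB := matchingS sBA mA; have uv := edge_neq sBA bB.
have sBa : B :\ [set u; v] \subset A by apply: subset_trans sBA; apply: subsetDl.
have cBa : #|B :\ [set u; v]| = k by rewrite cardD1_in // cB subn1.
rewrite (eq_bigr (fun M => K n B u v (fun M2 => rA pick k (B :\ [set u; v]) M2 N) M)); last first.
  by move=> M MB; apply: IND.
by rewrite UNI // -mulrA IH // mulrA -CNT.
Qed.

Lemma NZ k : forall B : {set {set V}}, B \subset A -> #|B| = k ->
  #|PM (set0 : {set {set V}})| != 0%N -> #|PM B| != 0%N.
Proof.
elim: k => [|k IH] B sBA cB P0.
  by have -> : B = set0 by apply: cards0_eq.
have Bn0 : B != set0 by apply/eqP => E; rewrite E cards0 in cB.
have bB := hpick set0 sBA Bn0.
set u := (pick B set0).1 in bB *; set v := (pick B set0).2 in bB *.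
have sBa : B :\ [set u; v] \subset A by apply: subset_trans sBA; apply: subsetDl.
have cBa : #|B :\ [set u; v]| = k by rewrite cardD1_in // cB subn1.
have := IH _ sBa cBa P0; rewrite -(pnatr_eq0 rat) => H.
rewrite -(pnatr_eq0 rat) (CNT sBA bB) mulf_neq0 // /cst invr_eq0 pnatr_eq0 addn1 //.
Qed.

Lemma SUP k : forall (B M N : {set {set V}}) (e : {set V}), B \subset A -> e \in N -> e \notin M ->
  ~~ [exists x in e, covered A x] -> rA pick k B M N = 0.
Proof.
elim: k => [|k IH] B M N e sBA eN eM nc.
  by rewrite /=; case: eqP => // E; by move: eM; rewrite -E eN.
case: (eqVneq B set0) => [->|Bn0]; first by rewrite /= eqxx; case: eqP => // E; by move: eM; rewrite -E eN.
rewrite rA_S // /stepexpr.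
have bB := hpick M sBA Bn0.
set u := (pick B M).1 in bB *; set v := (pick B M).2 in bB *.
have sBa : B :\ [set u; v] \subset A by apply: subset_trans sBA; apply: subsetDl.
case: eqP => _; first exact: (IH _ _ _ _ sBa eN eM nc).
apply: big1 => e0 _; apply: big1 => x _; apply: big1 => y _.
rewrite (IH _ _ _ _ sBa eN eM nc) (IH _ _ _ _ sBa eN _ nc) ?mulr0 ?addr0 ?mulr0 //.
have Acov : forall w, w \in [set u; v] -> covered A w.
  by move=> w wi; apply: (covered_mem (subsetP sBA _ bB) wi).
rewrite /swapM !inE negb_or; apply/andP; split; first by rewrite (negbTE eM) !andbF.
rewrite negb_or; apply/andP; split; apply/negP => /eqP E; subst e; move/negP: nc; apply; apply/exists_inP.
  by exists u; rewrite ?set21 // Acov // set21.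
by exists v; rewrite ?set21 // Acov // set22.
Qed.

End Main.


Unset Implicit Arguments.
Local Open Scope ring_scope.

Theorem mainTheorem14 (n : nat) (A : {set {set 'I_(2 * n)}})
  (pick : {set {set 'I_(2 * n)}} -> {set {set 'I_(2 * n)}} -> 'I_(2 * n) * 'I_(2 * n)) :
  matching A ->
  (forall A' M' : {set {set 'I_(2 * n)}}, A' \subset A -> A' != set0 ->
      [set (pick A' M').1; (pick A' M').2] \in A') ->
  [/\ (* r_A(M), M uniform among perfect matchings containing A, is uniform *)
      (forall N : {set {set 'I_(2 * n)}},
         \sum_(M : {set {set 'I_(2 * n)}} | perfect M && (A \subset M))
            rA pick #|A| A M N / #|[set M : {set {set 'I_(2 * n)}} | perfect M && (A \subset M)]|%:R
         = (perfect N)%:R / #|[set M : {set {set 'I_(2 * n)}} | perfect M]|%:R),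
      (* every new edge is incident to a vertex covered by A *)
      (forall (M N : {set {set 'I_(2 * n)}}) (e : {set 'I_(2 * n)}),
         perfect M -> A \subset M -> rA pick #|A| A M N != 0 ->
         e \in N -> e \notin M -> exists2 x, x \in e & covered A x)
    & (forall M N B : {set {set 'I_(2 * n)}},
         perfect M -> A \subset M -> matching (A :|: B) -> ~~ (B \subset M) ->
         rA pick #|A| A M N != 0 -> ~~ (B \subset N))].
Proof.
move=> mA hpick.
have hV : #|'I_(2 * n)| = (2 * n)%N by rewrite card_ord.
have sP0 : #|[set M : {set {set 'I_(2 * n)}} | perfect M]| =
    #|PM (set0 : {set {set 'I_(2 * n)}})|.
  by apply: eq_card => M; rewrite !inE sub0set andbT.
have supp : forall (M N : {set {set 'I_(2 * n)}}) (e : {set 'I_(2 * n)}),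
    perfect M -> A \subset M -> rA pick #|A| A M N != 0 ->
    e \in N -> e \notin M -> exists2 x, x \in e & covered A x.
  move=> M N e pM sAM nz eN eM.
  case: (boolP [exists x in e, covered A x]) => [/exists_inP[x xe cx]|H]; first by exists x.
  by move: nz; rewrite (SUP hpick #|A| (subxx A) eN eM H) eqxx.
split=> //.
- move=> N; rewrite -mulr_suml sP0.
  have -> : \sum_(M | perfect M && (A \subset M)) rA pick #|A| A M N =
      \sum_(M in PM A) rA pick #|A| A M N by apply: eq_bigl => M; rewrite PMP.
  have -> : #|[set M : {set {set 'I_(2 * n)}} | perfect M && (A \subset M)]| = #|PM A| by [].
  have U := UN hV mA hpick (subxx A) (erefl _) N.
  case: (eqVneq #|PM (set0 : {set {set 'I_(2 * n)}})| 0%N) => [Z|NZ0].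
    have : (#|PM A| <= #|PM (set0 : {set {set 'I_(2 * n)}})|)%N.
      apply: subset_leq_card; apply/subsetP => M.
      by rewrite !PMP => /andP[-> _]; rewrite sub0set.
    move/leq_trans/(_ (eq_leq Z)); rewrite leqn0 => /eqP /cards0_eq ->.
    by rewrite big_set0 mul0r Z invr0 mulr0.
  have NZA := NZ hV mA hpick (subxx A) (erefl _) NZ0.
  have P0nz : (#|PM (set0 : {set {set 'I_(2 * n)}})|%:R : rat) != 0 by rewrite pnatr_eq0.
  have PAnz : (#|PM A|%:R : rat) != 0 by rewrite pnatr_eq0.
  rewrite -[\sum_(M in PM A) _](mulfK P0nz) U.
  by field; rewrite P0nz PAnz.
- move=> M N B pM sAM mAB nsBM nz; apply/negP => sBN.
  have [b bB bM] := subsetPn nsBM.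
  have [x xb /exists_inP[a aA xa]] := supp M N b pM sAM nz (subsetP sBN _ bB) bM.
  have aAB : a \in A :|: B by rewrite inE aA.
  have bAB : b \in A :|: B by rewrite inE bB orbT.
  have E := matching_eq mAB aAB bAB xa xb.
  by move: bM; rewrite -E (subsetP sAM _ aA).
Qed.
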